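(* Let $I\subset C_+$ be a closed interval (arc) and suppose that either ($-$) the first positive hitting time of points of $I$ with $S_-$ defines a continuous function $\tau:I\to\mathbb{R}_{>0}$ and for every $q\in I$ the flow line $Fl_t(q)$ intersects $S_-$ transversely at $t=\tau(q)$, or ($+$) the same holds with $S_+$ in place of $S_-$. Let $h(q)=Fl_{\tau(q)}(q)$ and define the slope function $s_I=\mathrm{pr}_{w_2}\circ h$ in case ($-$) and $s_I=\mathrm{pr}_{w_1}\circ h$ in case ($+$). If $s_I(p_0)=0$ for some $p_0\in I$, then $p_0$ is the initial point of a symmetric periodic orbit.
   Context: Levi-Civita regularized restricted three-body problem: on $\mathbb{R}^4=\{(z_1,z_2,w_1,w_2)\}$ with symplectic form $dw\wedge dz$, $K_{\mu,c}=\tfrac12|w|^2+c|z|^2-\tfrac{1-\mu}{2}+2|z|^2(z_1w_2-z_2w_1)-\mu(z_1w_2+z_2w_1)-\frac{\mu|z|^2}{|2z^2-1|}$ (complex notation $z=z_1+iz_2$), with $-c$ below the smallest critical value of the Jacobi Hamiltonian; $\Sigma_{\mu,c}$ is the compact component of $K_{\mu,c}^{-1}(0)$ containing $\{z=0\}$ and $Fl_t$ the flow of $X_{K_{\mu,c}}$ on it. $R_+(z,w)=(\bar z,-\bar w)$, $R_-(z,w)=(-\bar z,\bar w)$ are anti-symplectic involutions preserving $K_{\mu,c}$; $C_\pm=\mathrm{Fix}(R_\pm)\cap\Sigma_{\mu,c}$, so $C_+=\{z_2=0,w_1=0\}\cap\Sigma_{\mu,c}$, $C_-=\{z_1=0,w_2=0\}\cap\Sigma_{\mu,c}$.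 $S_+=\{z_2=0\}\cap\Sigma_{\mu,c}$, $S_-=\{z_1=0\}\cap\Sigma_{\mu,c}$. A $T$-periodic orbit $\gamma$ is symmetric if, for some $R\in\{R_+,R_-\}$ and after a time shift, $R(\gamma(T-t))=\gamma(t)$. *)

(* Defs.v *)
From Stdlib Require Import Reals.
From Coquelicot Require Import Coquelicot.
Open Scope R_scope.

(** Points of R^4 = {(z1,z2,w1,w2)}, z = z1 + i z2, w = w1 + i w2. *)
Record pt := Pt { z1 : R; z2 : R; w1 : R; w2 : R }.

Definition dist4 (x y : pt) : R :=
  sqrt ((z1 x - z1 y)^2 + (z2 x - z2 y)^2 + (w1 x - w1 y)^2 + (w2 x - w2 y)^2).

Definition open4 (U : pt -> Prop) : Prop :=
  forall x, U x -> exists eps, 0 < eps /\ forall y, dist4 x y < eps -> U y.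

Definition connected4 (A : pt -> Prop) : Prop :=
  forall U V : pt -> Prop, open4 U -> open4 V ->
    (forall x, A x -> U x \/ V x) ->
    (exists x, A x /\ U x) -> (exists x, A x /\ V x) ->
    exists x, A x /\ U x /\ V x.

(** |2 z^2 - 1|, with 2z^2 - 1 = (2(z1^2-z2^2) - 1) + i (4 z1 z2). *)
Definition abs_2z2m1 (x : pt) : R :=
  sqrt ((2 * (z1 x ^ 2 - z2 x ^ 2) - 1) ^ 2 + (4 * z1 x * z2 x) ^ 2).

(** The Levi-Civita regularized Hamiltonian K_{mu,c}. *)
Definition K (mu c : R) (x : pt) : R :=
  let zz := z1 x ^ 2 + z2 x ^ 2 in
  / 2 * (w1 x ^ 2 + w2 x ^ 2) + c * zz - (1 - mu) / 2
  + 2 * zz * (z1 x * w2 x - z2 x * w1 x)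
  - mu * (z1 x * w2 x + z2 x * w1 x)
  - mu * zz / abs_2z2m1 x.

Definition d_z1 (f : pt -> R) (x : pt) : R :=
  Derive (fun t => f (Pt t (z2 x) (w1 x) (w2 x))) (z1 x).
Definition d_z2 (f : pt -> R) (x : pt) : R :=
  Derive (fun t => f (Pt (z1 x) t (w1 x) (w2 x))) (z2 x).
Definition d_w1 (f : pt -> R) (x : pt) : R :=
  Derive (fun t => f (Pt (z1 x) (z2 x) t (w2 x))) (w1 x).
Definition d_w2 (f : pt -> R) (x : pt) : R :=
  Derive (fun t => f (Pt (z1 x) (z2 x) (w1 x) t)) (w2 x).

(** Hamiltonian vector field for omega = dw /\ dz, with i_{X_K} omega = -dK:
    z' = dK/dw,  w' = -dK/dz. *)
Definition XK (mu c : R) (x : pt) : pt :=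
  Pt (d_w1 (K mu c) x) (d_w2 (K mu c) x)
     (- d_z1 (K mu c) x) (- d_z2 (K mu c) x).

(** The Jacobi Hamiltonian (rotating frame, Earth of mass 1-mu at q = 0,
    Moon of mass mu at q = (1,0)); here z-fields are q, w-fields are p.
    K_{mu,c} = |z|^2 (H(2 z^2, w / conj z) + c). *)
Definition Hjac (mu : R) (y : pt) : R :=
  / 2 * (w1 y ^ 2 + w2 y ^ 2)
  - (1 - mu) / sqrt (z1 y ^ 2 + z2 y ^ 2)
  - mu / sqrt ((z1 y - 1) ^ 2 + z2 y ^ 2)
  + z1 y * w2 y - z2 y * w1 y - mu * w2 y.

Definition jacobi_critical (mu : R) (y : pt) : Prop :=
  ~ (z1 y = 0 /\ z2 y = 0) /\ ~ (z1 y = 1 /\ z2 y = 0) /\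
  is_derive (fun t => Hjac mu (Pt t (z2 y) (w1 y) (w2 y))) (z1 y) 0 /\
  is_derive (fun t => Hjac mu (Pt (z1 y) t (w1 y) (w2 y))) (z2 y) 0 /\
  is_derive (fun t => Hjac mu (Pt (z1 y) (z2 y) t (w2 y))) (w1 y) 0 /\
  is_derive (fun t => Hjac mu (Pt (z1 y) (z2 y) (w1 y) t)) (w2 y) 0.

Definition below_crit (mu c : R) : Prop :=
  forall y, jacobi_critical mu y -> - c < Hjac mu y.

(** Sigma_{mu,c}: the connected component of K^{-1}(0) containing {z = 0}. *)
Definition Sigma (mu c : R) (x : pt) : Prop :=
  exists A : pt -> Prop, connected4 A /\ (forall y, A y -> K mu c y = 0) /\
    A x /\ exists y, A y /\ z1 y = 0 /\ z2 y = 0.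

Definition is_flow (mu c : R) (Fl : R -> pt -> pt) : Prop :=
  forall q, Sigma mu c q ->
    Fl 0 q = q /\
    forall t,
      is_derive (fun s => z1 (Fl s q)) t (z1 (XK mu c (Fl t q))) /\
      is_derive (fun s => z2 (Fl s q)) t (z2 (XK mu c (Fl t q))) /\
      is_derive (fun s => w1 (Fl s q)) t (w1 (XK mu c (Fl t q))) /\
      is_derive (fun s => w2 (Fl s q)) t (w2 (XK mu c (Fl t q))).

Definition Rplus (x : pt) : pt := Pt (z1 x) (- z2 x) (- w1 x) (w2 x).
Definition Rminus (x : pt) : pt := Pt (- z1 x) (z2 x) (w1 x) (- w2 x).

Definition Cplus (mu c : R) (x : pt) : Prop := Sigma mu c x /\ z2 x = 0 /\ w1 x = 0.
Definition Cminus (mu c : R) (x : pt) : Prop := Sigma mu c x /\ z1 x = 0 /\ w2 x = 0.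

(** Side b = true : case (+), S_+ = {z2 = 0} ∩ Sigma, slope coordinate w1.
    Side b = false: case (-), S_- = {z1 = 0} ∩ Sigma, slope coordinate w2. *)
Definition cut_coord (b : bool) (x : pt) : R := if b then z2 x else z1 x.
Definition slope_coord (b : bool) (x : pt) : R := if b then w1 x else w2 x.
Definition Sside (mu c : R) (b : bool) (x : pt) : Prop :=
  Sigma mu c x /\ cut_coord b x = 0.

(** I is a closed arc in C_+: the image of an injective continuous path
    gam : [0,1] -> C_+. *)
Definition arc_in_Cplus (mu c : R) (gam : R -> pt) : Prop :=
  (forall s, 0 <= s <= 1 -> Cplus mu c (gam s)) /\
  (forall s s', 0 <= s <= 1 -> 0 <= s' <= 1 -> gam s = gam s' -> s = s') /\
  (forall s, 0 <= s <= 1 -> forall eps, 0 < eps -> exists del, 0 < del /\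
     forall s', 0 <= s' <= 1 -> Rabs (s - s') < del -> dist4 (gam s) (gam s') < eps).

Definition in_arc (gam : R -> pt) (x : pt) : Prop :=
  exists s, 0 <= s <= 1 /\ x = gam s.

Definition first_hit (mu c : R) (b : bool) (Fl : R -> pt -> pt) (q : pt) (T : R) : Prop :=
  0 < T /\ Sside mu c b (Fl T q) /\
  forall t, 0 < t < T -> ~ Sside mu c b (Fl t q).

Definition hitting_hyp (mu c : R) (b : bool) (Fl : R -> pt -> pt)
    (gam : R -> pt) (tau : pt -> R) : Prop :=
  (forall q, in_arc gam q -> first_hit mu c b Fl q (tau q)) /\
  (forall q, in_arc gam q -> forall eps, 0 < eps -> exists del, 0 < del /\
     forall q', in_arc gam q' -> dist4 q q' < del -> Rabs (tau q - tau q') < eps) /\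
  (* transversality of the flow line to S_side at t = tau q *)
  (forall q, in_arc gam q -> exists l,
     is_derive (fun t => cut_coord b (Fl t q)) (tau q) l /\ l <> 0).

Definition symmetric_periodic_from (Fl : R -> pt -> pt) (p : pt) : Prop :=
  exists T, 0 < T /\ (forall t, Fl (t + T) p = Fl t p) /\
  exists Rinv : pt -> pt, (Rinv = Rplus \/ Rinv = Rminus) /\
  exists s, forall t, Rinv (Fl (T - t + s) p) = Fl (t + s) p.

(* Main.v *)
Require Import Defs.
From Stdlib Require Import Reals Lra Psatz Classical.
From Coquelicot Require Import Coquelicot.
Require Import Defs.
Open Scope R_scope.


Definition Qf (a b : R) := (2 * (a ^ 2 - b ^ 2) - 1) ^ 2 + (4 * a * b) ^ 2.
Definition Kexpr (mu cc a b c d : R) :=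
  / 2 * (c ^ 2 + d ^ 2) + cc * (a^2+b^2) - (1 - mu) / 2
  + 2 * (a^2+b^2) * (a * d - b * c) - mu * (a * d + b * c)
  - mu * (a^2+b^2) / sqrt (Qf a b).
Definition Ka (mu cc a b c d : R) :=
  2 * cc * a + 4 * a * (a * d - b * c) + 2 * (a^2+b^2) * d - mu * d
  - mu * (2 * a / sqrt (Qf a b) - (a^2+b^2) * (8 * a * (2 * (a^2 - b^2) - 1) + 32 * a * b^2)
       / (2 * (sqrt (Qf a b) * sqrt (Qf a b) * sqrt (Qf a b)))).
Definition Kb (mu cc a b c d : R) :=
  2 * cc * b + 4 * b * (a * d - b * c) - 2 * (a^2+b^2) * c - mu * c
  - mu * (2 * b / sqrt (Qf a b) - (a^2+b^2) * (- 8 * b * (2 * (a^2 - b^2) - 1) + 32 * a^2 * b)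
       / (2 * (sqrt (Qf a b) * sqrt (Qf a b) * sqrt (Qf a b)))).
Definition Kc (mu cc a b c d : R) := c - 2 * (a^2+b^2) * b - mu * b.
Definition Kd (mu cc a b c d : R) := d + 2 * (a^2+b^2) * a - mu * a.

Lemma K_eq mu cc x : K mu cc x = Kexpr mu cc (z1 x) (z2 x) (w1 x) (w2 x).
Proof. reflexivity. Qed.

Lemma K_chain mu cc (fa fb fc fd : R -> R) (t da db dc dd : R) :
  is_derive fa t da -> is_derive fb t db -> is_derive fc t dc -> is_derive fd t dd ->
  0 < Qf (fa t) (fb t) ->
  is_derive (fun s => Kexpr mu cc (fa s) (fb s) (fc s) (fd s)) t
    (Ka mu cc (fa t) (fb t) (fc t) (fd t) * da + Kb mu cc (fa t) (fb t) (fc t) (fd t) * db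
     + Kc mu cc (fa t) (fb t) (fc t) (fd t) * dc + Kd mu cc (fa t) (fb t) (fc t) (fd t) * dd).
Proof.
  intros Ha Hb Hc Hd HQ.
  unfold Kexpr, Ka, Kb, Kc, Kd, Qf in *.
  auto_derive.
  - repeat split; try (eexists; eassumption).
    + lra.
    + apply Rgt_not_eq. apply sqrt_lt_R0. lra.
  - replace (Derive (fun x => fa x) t) with da by (symmetry; now apply is_derive_unique).
    replace (Derive (fun x => fb x) t) with db by (symmetry; now apply is_derive_unique).
    replace (Derive (fun x => fc x) t) with dc by (symmetry; now apply is_derive_unique).
    replace (Derive (fun x => fd x) t) with dd by (symmetry; now apply is_derive_unique).
    assert (sqrt ((2 * (fa t ^ 2 - fb t ^ 2) - 1) ^ 2 + (4 * fa t * fb t) ^ 2) <> 0).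
    { apply Rgt_not_eq. apply sqrt_lt_R0. lra. }
    match goal with |- ?l = ?r => change (@eq R l r) end.
    set (S := sqrt _) in *. field. auto.
Qed.

Definition XKf (mu cc : R) (x : pt) : pt :=
  let a := z1 x in let b := z2 x in let c := w1 x in let d := w2 x in
  Pt (Kc mu cc a b c d) (Kd mu cc a b c d) (- Ka mu cc a b c d) (- Kb mu cc a b c d).

Definition Qp (x : pt) := Qf (z1 x) (z2 x).

Lemma XK_eq mu cc x : 0 < Qp x -> XK mu cc x = XKf mu cc x.
Proof.
  intros HQ. unfold Qp in HQ. destruct x as [a b c d]. simpl in HQ.
  unfold XK, XKf, d_z1, d_z2, d_w1, d_w2; simpl.
  assert (Hid : forall y : R, is_derive (fun t : R => t) y 1) by (intros; auto_derive; [exact I| ring]).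
  assert (Hc : forall k y : R, is_derive (fun _ : R => k) y 0) by (intros; auto_derive; [exact I| ring]).
  assert (HE : forall f (y l l' : R), is_derive f y l -> l = l' -> is_derive f y l') by (intros; subst; auto).
  f_equal; try f_equal; apply is_derive_unique.
  - eapply HE. exact (K_chain mu cc (fun _ => a) (fun _ => b) (fun t => t) (fun _ => d) c 0 0 1 0 (Hc a c) (Hc b c) (Hid c) (Hc d c) HQ). cbv beta; ring.
  - eapply HE. exact (K_chain mu cc (fun _ => a) (fun _ => b) (fun _ => c) (fun t => t) d 0 0 0 1 (Hc a d) (Hc b d) (Hc c d) (Hid d) HQ). cbv beta; ring.
  - eapply HE. exact (K_chain mu cc (fun t => t) (fun _ => b) (fun _ => c) (fun _ => d) a 1 0 0 0 (Hid a) (Hc b a) (Hc c a) (Hc d a) HQ). cbv beta; ring.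
  - eapply HE. exact (K_chain mu cc (fun _ => a) (fun t => t) (fun _ => c) (fun _ => d) b 0 1 0 0 (Hc a b) (Hid b) (Hc c b) (Hc d b) HQ). cbv beta; ring.
Qed.

Lemma dist4_sym x y : dist4 x y = dist4 y x.
Proof. unfold dist4. f_equal. ring. Qed.

Lemma dist4_nonneg x y : 0 <= dist4 x y.
Proof. apply sqrt_pos. Qed.

Lemma dist4_refl x : dist4 x x = 0.
Proof. unfold dist4. replace (_ + _) with 0 by ring. apply sqrt_0. Qed.

Lemma sqrt_ge_abs a s : 0 <= s -> Rabs a <= sqrt (a ^ 2 + s).
Proof.
  intros Hs. rewrite <- sqrt_Rsqr_abs. apply sqrt_le_1_alt. unfold Rsqr. nra.
Qed.

Lemma dist4_z1 x y : Rabs (z1 x - z1 y) <= dist4 x y.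
Proof. unfold dist4. replace (_ + _ + _ + _) with ((z1 x - z1 y)^2 + ((z2 x - z2 y)^2 + (w1 x - w1 y)^2 + (w2 x - w2 y)^2)) by ring. apply sqrt_ge_abs. repeat apply Rplus_le_le_0_compat; apply pow2_ge_0. Qed.
Lemma dist4_z2 x y : Rabs (z2 x - z2 y) <= dist4 x y.
Proof. unfold dist4. replace (_ + _ + _ + _) with ((z2 x - z2 y)^2 + ((z1 x - z1 y)^2 + (w1 x - w1 y)^2 + (w2 x - w2 y)^2)) by ring. apply sqrt_ge_abs. repeat apply Rplus_le_le_0_compat; apply pow2_ge_0. Qed.
Lemma dist4_w1 x y : Rabs (w1 x - w1 y) <= dist4 x y.
Proof. unfold dist4. replace (_ + _ + _ + _) with ((w1 x - w1 y)^2 + ((z2 x - z2 y)^2 + (z1 x - z1 y)^2 + (w2 x - w2 y)^2)) by ring. apply sqrt_ge_abs. repeat apply Rplus_le_le_0_compat; apply pow2_ge_0. Qed.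
Lemma dist4_w2 x y : Rabs (w2 x - w2 y) <= dist4 x y.
Proof. unfold dist4. replace (_ + _ + _ + _) with ((w2 x - w2 y)^2 + ((z2 x - z2 y)^2 + (w1 x - w1 y)^2 + (z1 x - z1 y)^2)) by ring. apply sqrt_ge_abs. repeat apply Rplus_le_le_0_compat; apply pow2_ge_0. Qed.

Lemma dist4_le_sum x y : dist4 x y <= Rabs (z1 x - z1 y) + Rabs (z2 x - z2 y) + Rabs (w1 x - w1 y) + Rabs (w2 x - w2 y).
Proof.
  unfold dist4. rewrite <- (sqrt_Rsqr (Rabs (z1 x - z1 y) + Rabs (z2 x - z2 y) + Rabs (w1 x - w1 y) + Rabs (w2 x - w2 y))).
  2: { pose proof (Rabs_pos (z1 x - z1 y)); pose proof (Rabs_pos (z2 x - z2 y));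
       pose proof (Rabs_pos (w1 x - w1 y)); pose proof (Rabs_pos (w2 x - w2 y)); lra. }
  apply sqrt_le_1_alt. unfold Rsqr.
  pose proof (Rabs_pos (z1 x - z1 y)); pose proof (Rabs_pos (z2 x - z2 y));
  pose proof (Rabs_pos (w1 x - w1 y)); pose proof (Rabs_pos (w2 x - w2 y)).
  assert (E : forall a, a ^ 2 = Rabs a * Rabs a) by (intros; rewrite <- Rabs_mult; simpl; rewrite Rmult_1_r; symmetry; apply Rabs_pos_eq; apply Rle_0_sqr).
  rewrite !E. nra.
Qed.

Definition LL (f : pt -> R) (x : pt) : Prop :=
  exists r L, 0 < r /\ 0 <= L /\ forall u v, dist4 x u < r -> dist4 x v < r ->
    Rabs (f u - f v) <= L * dist4 u v.

Lemma LL_const k x : LL (fun _ => k) x.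
Proof. exists 1, 0. repeat split; try lra. intros. replace (k - k) with 0 by ring. rewrite Rabs_R0. lra. Qed.

Lemma LL_z1 x : LL z1 x.
Proof. exists 1, 1. repeat split; try lra. intros. rewrite Rmult_1_l. apply dist4_z1. Qed.
Lemma LL_z2 x : LL z2 x.
Proof. exists 1, 1. repeat split; try lra. intros. rewrite Rmult_1_l. apply dist4_z2. Qed.
Lemma LL_w1 x : LL w1 x.
Proof. exists 1, 1. repeat split; try lra. intros. rewrite Rmult_1_l. apply dist4_w1. Qed.
Lemma LL_w2 x : LL w2 x.
Proof. exists 1, 1. repeat split; try lra. intros. rewrite Rmult_1_l. apply dist4_w2. Qed.

Lemma LL_bound f x r L : 0 <= L -> (forall u v, dist4 x u < r -> dist4 x v < r ->
    Rabs (f u - f v) <= L * dist4 u v) -> forall u, dist4 x u < r -> Rabs (f u) <= Rabs (f x) + L * r.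
Proof.
  intros HL H u Hu.
  assert (0 <= dist4 x u) by apply dist4_nonneg.
  assert (Hx : dist4 x x < r) by (rewrite dist4_refl; lra).
  specialize (H u x Hu Hx). rewrite dist4_sym in H.
  pose proof (Rabs_triang_inv (f u) (f x)). nra.
Qed.

Lemma LL_plus f g x : LL f x -> LL g x -> LL (fun u => f u + g u) x.
Proof.
  intros [r1 [L1 [Hr1 [HL1 H1]]]] [r2 [L2 [Hr2 [HL2 H2]]]].
  exists (Rmin r1 r2), (L1 + L2). repeat split.
  - apply Rmin_pos; lra.
  - lra.
  - intros u v Hu Hv.
    pose proof (Rmin_l r1 r2); pose proof (Rmin_r r1 r2).
    specialize (H1 u v ltac:(lra) ltac:(lra)). specialize (H2 u v ltac:(lra) ltac:(lra)).
    replace (f u + g u - (f v + g v)) with ((f u - f v) + (g u - g v)) by ring.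
    eapply Rle_trans. apply Rabs_triang. lra.
Qed.

Lemma LL_opp f x : LL f x -> LL (fun u => - f u) x.
Proof.
  intros [r [L [Hr [HL H]]]]. exists r, L. repeat split; auto.
  intros u v Hu Hv. replace (- f u - - f v) with (- (f u - f v)) by ring.
  rewrite Rabs_Ropp. auto.
Qed.

Lemma LL_minus f g x : LL f x -> LL g x -> LL (fun u => f u - g u) x.
Proof. intros. unfold Rminus. apply LL_plus; auto. apply LL_opp; auto. Qed.

Lemma LL_mult f g x : LL f x -> LL g x -> LL (fun u => f u * g u) x.
Proof.
  intros [r1 [L1 [Hr1 [HL1 H1]]]] [r2 [L2 [Hr2 [HL2 H2]]]].
  set (r := Rmin r1 r2).
  assert (Hr : 0 < r) by (apply Rmin_pos; lra).
  pose proof (Rmin_l r1 r2); pose proof (Rmin_r r1 r2).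
  pose proof (LL_bound f x r1 L1 HL1 H1) as B1.
  pose proof (LL_bound g x r2 L2 HL2 H2) as B2.
  set (M1 := Rabs (f x) + L1 * r1). set (M2 := Rabs (g x) + L2 * r2).
  assert (0 <= M1) by (unfold M1; pose proof (Rabs_pos (f x)); nra).
  assert (0 <= M2) by (unfold M2; pose proof (Rabs_pos (g x)); nra).
  exists r, (M1 * L2 + M2 * L1). repeat split; auto.
  - nra.
  - intros u v Hu Hv.
    replace (f u * g u - f v * g v) with (f u * (g u - g v) + g v * (f u - f v)) by ring.
    eapply Rle_trans. apply Rabs_triang. rewrite !Rabs_mult.
    specialize (H1 u v ltac:(unfold r in *; lra) ltac:(unfold r in *; lra)).
    specialize (H2 u v ltac:(unfold r in *; lra) ltac:(unfold r in *; lra)).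
    specialize (B1 u ltac:(unfold r in *; lra)). specialize (B2 v ltac:(unfold r in *; lra)).
    pose proof (Rabs_pos (f u)); pose proof (Rabs_pos (g v)).
    pose proof (Rabs_pos (g u - g v)); pose proof (Rabs_pos (f u - f v)).
    pose proof (dist4_nonneg u v).
    apply Rle_trans with (M1 * (L2 * dist4 u v) + M2 * (L1 * dist4 u v)).
    + apply Rplus_le_compat; apply Rmult_le_compat; auto; fold M1 M2 in B1, B2; lra.
    + nra.
Qed.

Lemma LL_pow f n x : LL f x -> LL (fun u => f u ^ n) x.
Proof.
  intros H. induction n.
  - simpl. apply LL_const.
  - simpl. apply LL_mult; auto.
Qed.

Lemma LL_away f x : LL f x -> f x <> 0 -> exists r, 0 < r /\ forall u, dist4 x u < r -> Rabs (f u - f x) <= Rabs (f x) / 2.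
Proof.
  intros [r [L [Hr [HL H]]]] Hf.
  assert (Hfx : 0 < Rabs (f x)) by (apply Rabs_pos_lt; auto).
  exists (Rmin r (Rabs (f x) / (2 * (L + 1)))). split.
  - apply Rmin_pos; auto. apply Rdiv_lt_0_compat; lra.
  - intros u Hu.
    pose proof (Rmin_l r (Rabs (f x) / (2 * (L + 1)))); pose proof (Rmin_r r (Rabs (f x) / (2 * (L + 1)))).
    assert (Hx : dist4 x x < r) by (rewrite dist4_refl; lra).
    specialize (H x u Hx ltac:(lra)).
    assert (L * dist4 x u <= Rabs (f x) / 2).
    { assert (dist4 x u <= Rabs (f x) / (2 * (L + 1))) by lra.
      apply Rle_trans with (L * (Rabs (f x) / (2 * (L + 1)))).
      - apply Rmult_le_compat_l; auto.
      - unfold Rdiv. rewrite Rinv_mult. 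
        assert (L * / (L + 1) <= 1).
        { apply Rmult_le_reg_r with (L + 1). lra. rewrite Rmult_assoc, Rinv_l by lra. lra. }
        assert (0 < / 2) by lra. pose proof (Rinv_0_lt_compat (L+1) ltac:(lra)).
        nra. }
    rewrite Rabs_minus_sym. lra.
Qed.

Lemma LL_inv f x : LL f x -> f x <> 0 -> LL (fun u => / f u) x.
Proof.
  intros HLf Hf. destruct (LL_away f x HLf Hf) as [r0 [Hr0 Ha]].
  destruct HLf as [r [L [Hr [HL H]]]].
  assert (Hfx : 0 < Rabs (f x)) by (apply Rabs_pos_lt; auto).
  set (m := Rabs (f x) / 2).
  exists (Rmin r r0), (L / (m * m)). repeat split.
  - apply Rmin_pos; auto.
  - unfold m. apply Rmult_le_pos; auto. left. apply Rinv_0_lt_compat. nra.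
  - intros u v Hu Hv.
    pose proof (Rmin_l r r0); pose proof (Rmin_r r r0).
    specialize (H u v ltac:(lra) ltac:(lra)).
    pose proof (Ha u ltac:(lra)) as Au. pose proof (Ha v ltac:(lra)) as Av.
    pose proof (Rabs_triang_inv (f x) (f u)). pose proof (Rabs_triang_inv (f x) (f v)).
    rewrite Rabs_minus_sym in Au, Av.
    assert (m <= Rabs (f u)) by (unfold m; lra). assert (m <= Rabs (f v)) by (unfold m; lra).
    clear Au Av.
    assert (0 < m) by (unfold m; lra).
    assert (f u <> 0) by (intro E; rewrite E, Rabs_R0 in *; lra).
    assert (f v <> 0) by (intro E; rewrite E, Rabs_R0 in *; lra).
    replace (/ f u - / f v) with ((f v - f u) / (f u * f v)) by (field; auto).
    unfold Rdiv. rewrite Rabs_mult, Rabs_inv, Rabs_mult, <- Rabs_Ropp, Ropp_minus_distr.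
    pose proof (Rabs_pos (f u - f v)).
    assert (m * m <= Rabs (f u) * Rabs (f v)) by (apply Rmult_le_compat; lra).
    assert (/ (Rabs (f u) * Rabs (f v)) <= / (m * m)) by (apply Rinv_le_contravar; nra).
    assert (0 <= / (Rabs (f u) * Rabs (f v))) by (left; apply Rinv_0_lt_compat; nra).
    apply Rle_trans with (L * dist4 u v * / (m * m)).
    + apply Rmult_le_compat; auto.
    + pose proof (dist4_nonneg u v). lra.
Qed.

Lemma LL_div f g x : LL f x -> LL g x -> g x <> 0 -> LL (fun u => f u / g u) x.
Proof. intros. unfold Rdiv. apply LL_mult; auto. apply LL_inv; auto. Qed.

Lemma LL_sqrt f x : LL f x -> 0 < f x -> LL (fun u => sqrt (f u)) x.
Proof.
  intros HLf Hf. destruct (LL_away f x HLf ltac:(lra)) as [r0 [Hr0 Ha]].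
  destruct HLf as [r [L [Hr [HL H]]]].
  set (m := sqrt (f x / 2)).
  assert (Hm : 0 < m) by (apply sqrt_lt_R0; lra).
  exists (Rmin r r0), (L / m). repeat split.
  - apply Rmin_pos; auto.
  - apply Rmult_le_pos; auto. left. apply Rinv_0_lt_compat. lra.
  - intros u v Hu Hv.
    pose proof (Rmin_l r r0); pose proof (Rmin_r r r0).
    specialize (H u v ltac:(lra) ltac:(lra)).
    pose proof (Ha u ltac:(lra)) as Au. pose proof (Ha v ltac:(lra)) as Av.
    rewrite (Rabs_pos_eq (f x)) in Au, Av by lra.
    apply Rabs_le_between in Au. apply Rabs_le_between in Av.
    assert (m <= sqrt (f u)) by (apply sqrt_le_1_alt; lra).
    assert (m <= sqrt (f v)) by (apply sqrt_le_1_alt; lra).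
    assert (E : sqrt (f u) - sqrt (f v) = (f u - f v) / (sqrt (f u) + sqrt (f v))).
    { field_simplify_eq. 2: lra.
      rewrite <- !Rsqr_pow2, !Rsqr_sqrt by lra. ring. }
    rewrite E. unfold Rdiv. rewrite Rabs_mult, Rabs_inv, (Rabs_pos_eq (_ + _)) by lra.
    pose proof (Rabs_pos (f u - f v)).
    assert (/ (sqrt (f u) + sqrt (f v)) <= / m) by (apply Rinv_le_contravar; lra).
    assert (0 <= / (sqrt (f u) + sqrt (f v))) by (left; apply Rinv_0_lt_compat; lra).
    apply Rle_trans with (L * dist4 u v * / m).
    + apply Rmult_le_compat; auto.
    + pose proof (dist4_nonneg u v). lra.
Qed.

Lemma LL_ext f g x r0 : 0 < r0 -> (forall u, dist4 x u < r0 -> f u = g u) -> LL g x -> LL f x.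
Proof.
  intros Hr0 E [r [L [Hr [HL H]]]]. exists (Rmin r r0), L. repeat split; auto.
  - apply Rmin_pos; auto.
  - intros u v Hu Hv. pose proof (Rmin_l r r0); pose proof (Rmin_r r r0).
    rewrite !E by lra. apply H; lra.
Qed.

Ltac LLt := repeat match goal with
 | |- LL (fun _ => ?k) _ => apply LL_const
 | |- LL (fun u => z1 u) _ => apply LL_z1
 | |- LL (fun u => z2 u) _ => apply LL_z2
 | |- LL (fun u => w1 u) _ => apply LL_w1
 | |- LL (fun u => w2 u) _ => apply LL_w2
 | |- LL (fun u => @?f u + @?g u) ?x => apply (LL_plus f g x)
 | |- LL (fun u => @?f u - @?g u) ?x => apply (LL_minus f g x)
 | |- LL (fun u => @?f u * @?g u) ?x => apply (LL_mult f g x)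
 | |- LL (fun u => @?f u / @?g u) ?x => apply (LL_div f g x)
 | |- LL (fun u => - @?f u) ?x => apply (LL_opp f x)
 | |- LL (fun u => / @?f u) ?x => apply (LL_inv f x)
 | |- LL (fun u => @?f u ^ ?n) ?x => apply (LL_pow f n x)
 | |- LL (fun u => sqrt (@?f u)) ?x => apply (LL_sqrt f x)
 end.

Lemma LL_Qp x : LL Qp x.
Proof. unfold Qp, Qf. LLt. Qed.

Lemma LL_XK mu cc x : 0 < Qp x ->
  LL (fun u => z1 (XKf mu cc u)) x /\ LL (fun u => z2 (XKf mu cc u)) x /\
  LL (fun u => w1 (XKf mu cc u)) x /\ LL (fun u => w2 (XKf mu cc u)) x.
Proof.
  intros HQ. unfold Qp in HQ.
  assert (HS : sqrt (Qf (z1 x) (z2 x)) <> 0) by (apply Rgt_not_eq; apply sqrt_lt_R0; auto).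
  unfold XKf, Ka, Kb, Kc, Kd; simpl. unfold Qf in *.
  repeat split; LLt; cbv beta; try lra; try (apply Rmult_integral_contrapositive_currified; [lra|]);
    repeat apply Rmult_integral_contrapositive_currified; auto.
Qed.

Definition cont4 (f : pt -> R) (x : pt) : Prop :=
  forall eps, 0 < eps -> exists del, 0 < del /\ forall y, dist4 x y < del -> Rabs (f y - f x) < eps.

Lemma LL_cont4 f x : LL f x -> cont4 f x.
Proof.
  intros [r [L [Hr [HL H]]]] eps Heps.
  exists (Rmin r (eps / (L + 1))). split.
  - apply Rmin_pos; auto. apply Rdiv_lt_0_compat; lra.
  - intros y Hy. pose proof (Rmin_l r (eps / (L + 1))); pose proof (Rmin_r r (eps / (L + 1))).
    assert (Hx : dist4 x x < r) by (rewrite dist4_refl; lra).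
    specialize (H y x ltac:(lra) Hx). rewrite dist4_sym in H.
    pose proof (dist4_nonneg x y).
    assert (L * dist4 x y <= L * (eps / (L + 1))) by (apply Rmult_le_compat_l; lra).
    assert (L * (eps / (L + 1)) < eps).
    { unfold Rdiv. apply Rmult_lt_reg_r with (L + 1). lra.
      replace (L * (eps * / (L + 1)) * (L + 1)) with (L * eps) by (field; lra). nra. }
    lra.
Qed.

Lemma cont4_minus f g x : cont4 f x -> cont4 g x -> cont4 (fun u => f u - g u) x.
Proof.
  intros Hf Hg eps Heps.
  destruct (Hf (eps/2) ltac:(lra)) as [d1 [Hd1 H1]].
  destruct (Hg (eps/2) ltac:(lra)) as [d2 [Hd2 H2]].
  exists (Rmin d1 d2). split. apply Rmin_pos; auto.
  intros y Hy. pose proof (Rmin_l d1 d2); pose proof (Rmin_r d1 d2).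
  specialize (H1 y ltac:(lra)). specialize (H2 y ltac:(lra)).
  replace (f y - g y - (f x - g x)) with ((f y - f x) - (g y - g x)) by ring.
  eapply Rle_lt_trans. apply Rabs_triang. rewrite Rabs_Ropp. lra.
Qed.

Lemma cont4_mult f g x : cont4 f x -> cont4 g x -> cont4 (fun u => f u * g u) x.
Proof.
  intros Hf Hg eps Heps.
  set (A := Rabs (f x) + 1). set (B := Rabs (g x) + 1).
  assert (HA : 0 < A) by (unfold A; pose proof (Rabs_pos (f x)); lra).
  assert (HB : 0 < B) by (unfold B; pose proof (Rabs_pos (g x)); lra).
  destruct (Hf (Rmin 1 (eps / (2 * B))) ltac:(apply Rmin_pos; [lra| apply Rdiv_lt_0_compat; lra])) as [d1 [Hd1 H1]].
  destruct (Hg (eps / (2 * A)) ltac:(apply Rdiv_lt_0_compat; lra)) as [d2 [Hd2 H2]].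
  exists (Rmin d1 d2). split. apply Rmin_pos; auto.
  intros y Hy. pose proof (Rmin_l d1 d2); pose proof (Rmin_r d1 d2).
  specialize (H1 y ltac:(lra)). specialize (H2 y ltac:(lra)).
  pose proof (Rmin_l 1 (eps / (2 * B))); pose proof (Rmin_r 1 (eps / (2 * B))).
  replace (f y * g y - f x * g x) with (f y * (g y - g x) + g x * (f y - f x)) by ring.
  eapply Rle_lt_trans. apply Rabs_triang. rewrite !Rabs_mult.
  assert (Rabs (f y) <= A) by (unfold A; pose proof (Rabs_triang_inv (f y) (f x)); lra).
  assert (Rabs (g x) <= B) by (unfold B; lra).
  pose proof (Rabs_pos (f y)); pose proof (Rabs_pos (g x)).
  pose proof (Rabs_pos (g y - g x)); pose proof (Rabs_pos (f y - f x)).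
  assert (Rabs (f y) * Rabs (g y - g x) < A * (eps / (2 * A))).
  { apply Rle_lt_trans with (A * Rabs (g y - g x)). apply Rmult_le_compat_r; lra.
    apply Rmult_lt_compat_l; lra. }
  assert (Rabs (g x) * Rabs (f y - f x) < B * (eps / (2 * B))).
  { apply Rle_lt_trans with (B * Rabs (f y - f x)). apply Rmult_le_compat_r; lra.
    apply Rmult_lt_compat_l; lra. }
  replace (A * (eps / (2 * A))) with (eps / 2) in * by (field; lra).
  replace (B * (eps / (2 * B))) with (eps / 2) in * by (field; lra).
  lra.
Qed.

Lemma cont4_sqrt f x : cont4 f x -> 0 <= f x -> (forall y, 0 <= f y) -> cont4 (fun u => sqrt (f u)) x.
Proof.
  intros Hf Hx Hall eps Heps.
  destruct (Hf (eps * eps) ltac:(nra)) as [d [Hd H]].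
  exists d. split; auto. intros y Hy. specialize (H y Hy).
  assert (Key : forall a b, 0 <= a -> 0 <= b -> Rabs (sqrt a - sqrt b) <= sqrt (Rabs (a - b))).
  { intros a b Ha Hb.
    pose proof (sqrt_pos a); pose proof (sqrt_pos b).
    assert (Ea : sqrt a * sqrt a = a) by (apply sqrt_sqrt; auto).
    assert (Eb : sqrt b * sqrt b = b) by (apply sqrt_sqrt; auto).
    apply Rsqr_incr_0_var.
    - rewrite Rsqr_sqrt by apply Rabs_pos. rewrite <- Rsqr_abs. unfold Rsqr.
      destruct (Rle_dec b a).
      + rewrite Rabs_pos_eq by lra. assert (sqrt b <= sqrt a) by (apply sqrt_le_1_alt; lra). nra.
      + rewrite Rabs_left by lra. assert (sqrt a <= sqrt b) by (apply sqrt_le_1_alt; lra). nra.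
    - apply sqrt_pos. }
  eapply Rle_lt_trans. apply Key; auto.
  rewrite <- (sqrt_Rsqr eps) by lra. apply sqrt_lt_1_alt. split. apply Rabs_pos.
  unfold Rsqr; lra.
Qed.

Lemma cpt_eps f t : continuity_pt f t -> forall eps, 0 < eps -> exists del, 0 < del /\
  forall s, Rabs (s - t) < del -> Rabs (f s - f t) < eps.
Proof.
  intros H eps Heps. destruct (H eps Heps) as [del [Hdel Hd]].
  exists del. split; auto. intros s Hs.
  destruct (Req_dec s t) as [->|Hne].
  - replace (f t - f t) with 0 by ring. rewrite Rabs_R0. auto.
  - apply (Hd s). split. split. exact I. auto. exact Hs.
Qed.

Lemma derive_cpt f t l : is_derive f t l -> continuity_pt f t.
Proof.
  intros H. apply is_derive_Reals in H.
  apply (derivable_continuous_pt f t (exist _ l H)).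
Qed.

Definition sol (mu cc : R) (u : R -> pt) : Prop :=
  forall t,
      is_derive (fun s => z1 (u s)) t (z1 (XK mu cc (u t))) /\
      is_derive (fun s => z2 (u s)) t (z2 (XK mu cc (u t))) /\
      is_derive (fun s => w1 (u s)) t (w1 (XK mu cc (u t))) /\
      is_derive (fun s => w2 (u s)) t (w2 (XK mu cc (u t))).

Lemma curve_cont mu cc u t : sol mu cc u -> forall eps, 0 < eps -> exists del, 0 < del /\
  forall s, Rabs (s - t) < del -> dist4 (u t) (u s) < eps.
Proof.
  intros Hs eps Heps. destruct (Hs t) as [Ha [Hb [Hc Hd]]].
  destruct (cpt_eps _ _ (derive_cpt _ _ _ Ha) (eps/4) ltac:(lra)) as [d1 [Hd1 H1]].
  destruct (cpt_eps _ _ (derive_cpt _ _ _ Hb) (eps/4) ltac:(lra)) as [d2 [Hd2 H2]].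
  destruct (cpt_eps _ _ (derive_cpt _ _ _ Hc) (eps/4) ltac:(lra)) as [d3 [Hd3 H3]].
  destruct (cpt_eps _ _ (derive_cpt _ _ _ Hd) (eps/4) ltac:(lra)) as [d4 [Hd4 H4]].
  exists (Rmin (Rmin d1 d2) (Rmin d3 d4)). split.
  { repeat apply Rmin_pos; auto. }
  intros s Hst.
  pose proof (Rmin_l (Rmin d1 d2) (Rmin d3 d4)); pose proof (Rmin_r (Rmin d1 d2) (Rmin d3 d4)).
  pose proof (Rmin_l d1 d2); pose proof (Rmin_r d1 d2); pose proof (Rmin_l d3 d4); pose proof (Rmin_r d3 d4).
  specialize (H1 s ltac:(lra)). specialize (H2 s ltac:(lra)).
  specialize (H3 s ltac:(lra)). specialize (H4 s ltac:(lra)).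
  rewrite dist4_sym. eapply Rle_lt_trans. apply dist4_le_sum. lra.
Qed.

Lemma clopen_pos (P : R -> Prop) : P 0 ->
  (forall t, P t -> exists e, 0 < e /\ forall s, Rabs (s - t) < e -> P s) ->
  (forall t, (forall e, 0 < e -> exists s, Rabs (s - t) < e /\ P s) -> P t) ->
  forall t, 0 <= t -> P t.
Proof.
  intros P0 Hop Hcl t Ht. apply NNPP. intro Hnt.
  set (E := fun s => 0 <= s <= t /\ forall r, 0 <= r <= s -> P r).
  assert (Eb : bound E) by (exists t; intros s [Hs _]; lra).
  assert (E0 : exists s, E s) by (exists 0; split; [lra| intros r Hr; replace r with 0 by lra; auto]).
  destruct (completeness E Eb E0) as [sig [Hub Hlub]].
  assert (Hs0 : 0 <= sig) by (apply Hub; unfold E; split; [lra| intros r Hr; replace r with 0 by lra; auto]).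
  assert (Hst : sig <= t) by (apply Hlub; intros s [Hs _]; lra).
  assert (Hbelow : forall r, 0 <= r < sig -> P r).
  { intros r Hr. apply NNPP. intro Hnr.
    assert (sig <= r).
    { apply Hlub. intros s [Hs Hs2]. destruct (Rle_dec s r); auto.
      exfalso. apply Hnr. apply Hs2. lra. }
    lra. }
  assert (Psig : P sig).
  { apply Hcl. intros e He. destruct (Req_dec sig 0) as [E'|E'].
    - exists 0. rewrite E'. split. replace (0 - 0) with 0 by ring. rewrite Rabs_R0; auto. auto.
    - exists (Rmax 0 (sig - e/2)). split.
      + pose proof (Rmax_l 0 (sig - e/2)); pose proof (Rmax_r 0 (sig - e/2)).
        unfold Rmax. destruct (Rle_dec 0 (sig - e / 2)); apply Rabs_def1; lra.
      + apply Hbelow. unfold Rmax. destruct (Rle_dec 0 (sig - e / 2)); lra. }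
  destruct (Hop sig Psig) as [e [He Hes]].
  destruct (Req_dec sig t) as [->|Hne]; [contradiction|].
  assert (E (Rmin t (sig + e/2))).
  { split. split. pose proof (Rmin_r t (sig + e/2)). unfold Rmin; destruct (Rle_dec t (sig + e/2)); lra.
    apply Rmin_l.
    intros r Hr. destruct (Rlt_dec r sig). apply Hbelow; lra.
    apply Hes. pose proof (Rmin_r t (sig + e/2)). apply Rabs_def1; lra. }
  specialize (Hub _ H). unfold Rmin in Hub. destruct (Rle_dec t (sig + e/2)); lra.
Qed.

Lemma clopen_all (P : R -> Prop) : P 0 ->
  (forall t, P t -> exists e, 0 < e /\ forall s, Rabs (s - t) < e -> P s) ->
  (forall t, (forall e, 0 < e -> exists s, Rabs (s - t) < e /\ P s) -> P t) ->
  forall t, P t.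
Proof.
  intros P0 Hop Hcl t. destruct (Rle_dec 0 t).
  - apply clopen_pos; auto.
  - replace t with (- - t) by ring.
    apply (clopen_pos (fun s => P (- s))); try lra.
    + replace (-0) with 0 by ring. auto.
    + intros t' Ht'. destruct (Hop _ Ht') as [e [He H]]. exists e. split; auto.
      intros s Hs. apply H. replace (- s - - t') with (- (s - t')) by ring. rewrite Rabs_Ropp. auto.
    + intros t' H. apply Hcl. intros e He. destruct (H e He) as [s [Hs Ps]].
      exists (- s). split; auto. replace (- s - - t') with (- (s - t')) by ring. rewrite Rabs_Ropp. auto.
Qed.

Definition zzf (x : pt) := z1 x ^ 2 + z2 x ^ 2.
Definition Bf (mu cc : R) (x : pt) :=
  / 2 * (w1 x ^ 2 + w2 x ^ 2) + cc * zzf x - (1 - mu) / 2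
  + 2 * zzf x * (z1 x * w2 x - z2 x * w1 x) - mu * (z1 x * w2 x + z2 x * w1 x).
Definition hf (mu cc : R) (x : pt) := sqrt (Qp x) * Bf mu cc x - mu * zzf x.

Lemma Qp_nonneg x : 0 <= Qp x.
Proof. unfold Qp, Qf. apply Rplus_le_le_0_compat; apply pow2_ge_0. Qed.

Lemma h_K mu cc x : 0 < Qp x -> hf mu cc x = sqrt (Qp x) * K mu cc x.
Proof.
  intros HQ. assert (HS : sqrt (Qp x) <> 0) by (apply Rgt_not_eq; apply sqrt_lt_R0; auto).
  unfold hf, Bf, zzf, K, abs_2z2m1. unfold Qp, Qf in *. field. auto.
Qed.

Lemma h_Q0 mu cc x : Qp x = 0 -> hf mu cc x = - mu / 2.
Proof.
  intros HQ. unfold hf. rewrite HQ, sqrt_0.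
  assert (zzf x = / 2).
  { unfold Qp, Qf, zzf in *. set (a := z1 x) in *. set (b := z2 x) in *.
    pose proof (pow2_ge_0 (2 * (a ^ 2 - b ^ 2) - 1)). pose proof (pow2_ge_0 (4 * a * b)).
    assert (E1 : (2 * (a ^ 2 - b ^ 2) - 1) ^ 2 = 0) by lra.
    assert (E2 : (4 * a * b) ^ 2 = 0) by lra.
    rewrite <- Rsqr_pow2 in E1, E2. apply Rsqr_0_uniq in E1. apply Rsqr_0_uniq in E2.
    assert (a = 0 \/ b = 0) by (apply Rmult_integral in E2; destruct E2 as [E2|E2]; [apply Rmult_integral in E2; destruct E2; [lra|auto]|auto]).
    clearbody a b. destruct H as [H|H]; subst; simpl in *; nra. }
  rewrite H. field.
Qed.

Lemma cont4_h mu cc x : cont4 (hf mu cc) x.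
Proof.
  unfold hf. apply cont4_minus.
  - apply cont4_mult.
    + apply cont4_sqrt. apply LL_cont4, LL_Qp. apply Qp_nonneg. apply Qp_nonneg.
    + apply LL_cont4. unfold Bf, zzf. LLt.
  - apply LL_cont4. unfold zzf. LLt.
Qed.

Lemma comp_cont mu cc (f : pt -> R) u t : sol mu cc u -> cont4 f (u t) ->
  forall eps, 0 < eps -> exists del, 0 < del /\ forall s, Rabs (s - t) < del -> Rabs (f (u s) - f (u t)) < eps.
Proof.
  intros Hs Hf eps Heps. destruct (Hf eps Heps) as [d1 [Hd1 H1]].
  destruct (curve_cont mu cc u t Hs d1 Hd1) as [d2 [Hd2 H2]].
  exists d2. split; auto.
Qed.

Lemma K_deriv0 mu cc u r : sol mu cc u -> 0 < Qp (u r) -> is_derive (fun s => K mu cc (u s)) r 0.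
Proof.
  intros Hs HQ. destruct (Hs r) as [Ha [Hb [Hc Hd]]].
  rewrite (XK_eq mu cc _ HQ) in Ha, Hb, Hc, Hd.
  pose proof (K_chain mu cc _ _ _ _ r _ _ _ _ Ha Hb Hc Hd HQ) as H.
  eapply is_derive_ext. 2: { eapply (fun H l' (E : _ = l') => eq_ind _ (fun l => is_derive _ r l) H l' E). exact H.
    unfold XKf; simpl. ring. }
  intros; reflexivity.
Qed.

Lemma sol_energy mu cc u : 0 < mu -> sol mu cc u -> 0 < Qp (u 0) -> K mu cc (u 0) = 0 ->
  forall t, 0 < Qp (u t) /\ K mu cc (u t) = 0.
Proof.
  intros Hmu Hs HQ0 HK0.
  assert (Hall : forall t, hf mu cc (u t) = 0).
  { apply clopen_all.
    - rewrite h_K by auto. rewrite HK0. ring.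
    - intros t Ht.
      assert (HQt : 0 < Qp (u t)).
      { destruct (Qp_nonneg (u t)) as [?|E]; auto. symmetry in E. rewrite (h_Q0 mu cc _ E) in Ht. lra. }
      assert (HKt : K mu cc (u t) = 0).
      { rewrite h_K in Ht by auto. apply Rmult_integral in Ht. destruct Ht as [Ht|Ht]; auto.
        exfalso. pose proof (sqrt_lt_R0 _ HQt). lra. }
      destruct (comp_cont mu cc Qp u t Hs (LL_cont4 _ _ (LL_Qp (u t))) (Qp (u t) / 2) ltac:(lra)) as [e [He H]].
      exists e. split; auto. intros s Hst.
      assert (HQs : forall r, Rabs (r - t) < e -> 0 < Qp (u r)).
      { intros r Hr. specialize (H r Hr). apply Rabs_def2 in H. lra. }
      assert (HKs : K mu cc (u s) = 0).
      { destruct (MVT_gen (fun s => K mu cc (u s)) t s (fun _ => 0)) as [c [Hc E]].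
        - intros x Hx. apply K_deriv0; auto. apply HQs.
          unfold Rmin, Rmax in Hx. destruct (Rle_dec t s); apply Rabs_def1; apply Rabs_def2 in Hst; lra.
        - intros x Hx. eapply derive_cpt. apply K_deriv0; auto. apply HQs.
          unfold Rmin, Rmax in Hx. destruct (Rle_dec t s); apply Rabs_def1; apply Rabs_def2 in Hst; lra.
        - simpl in E. lra. }
      rewrite h_K by (apply HQs; auto). rewrite HKs. ring.
    - intros t H. apply NNPP. intro Hne.
      assert (Hp : 0 < Rabs (hf mu cc (u t))) by (apply Rabs_pos_lt; auto).
      destruct (comp_cont mu cc (hf mu cc) u t Hs (cont4_h mu cc _) _ Hp) as [e [He H2]].
      destruct (H e He) as [s [Hs1 Hs2]]. specialize (H2 s Hs1). rewrite Hs2 in H2.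
      rewrite Rminus_0_l, Rabs_Ropp in H2. lra. }
  intros t. specialize (Hall t).
  assert (HQt : 0 < Qp (u t)).
  { destruct (Qp_nonneg (u t)) as [?|E]; auto. symmetry in E. rewrite (h_Q0 mu cc _ E) in Hall. lra. }
  split; auto.
  rewrite h_K in Hall by auto. apply Rmult_integral in Hall. destruct Hall as [Ht|Ht]; auto.
  exfalso. pose proof (sqrt_lt_R0 _ HQt). lra.
Qed.

Lemma pt_eq x y : z1 x = z1 y -> z2 x = z2 y -> w1 x = w1 y -> w2 x = w2 y -> x = y.
Proof. destruct x, y; simpl; intros; subst; reflexivity. Qed.

Lemma gronwall0 (w dw : R -> R) t del L : 0 < del -> 0 <= L ->
  (forall s, Rabs (s - t) < del -> is_derive w s (dw s) /\ 0 <= w s /\ Rabs (dw s) <= L * w s) ->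
  w t = 0 -> forall s, Rabs (s - t) < del -> w s = 0.
Proof.
  intros Hd HL H Ht s Hs.
  assert (Hin : forall r, Rmin t s <= r <= Rmax t s -> Rabs (r - t) < del).
  { intros r Hr. unfold Rmin, Rmax in Hr. apply Rabs_def2 in Hs.
    destruct (Rle_dec t s); apply Rabs_def1; lra. }
  destruct (H s Hs) as [_ [Hws _]].
  destruct (Rle_dec t s) as [Hts|Hts].
  - set (g := fun r => exp (- L * (r - t)) * w r).
    assert (Hg : forall r, Rabs (r - t) < del -> is_derive g r (exp (- L * (r - t)) * (dw r - L * w r))).
    { intros r Hr. destruct (H r Hr) as [Hw _]. unfold g.
      auto_derive. repeat split; auto. exists (dw r); auto.
      replace (Derive (fun x => w x) r) with (dw r) by (symmetry; now apply is_derive_unique). replace (r + - t) with (r - t) by reflexivity. set (E := exp _). ring. }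
    destruct (MVT_gen g t s (fun r => exp (- L * (r - t)) * (dw r - L * w r))) as [c [Hc E]].
    + intros x Hx. apply Hg, Hin. lra.
    + intros x Hx. eapply derive_cpt. apply Hg, Hin. lra.
    + destruct (H c (Hin c Hc)) as [_ [Hwc Hdc]].
      assert (dw c - L * w c <= 0) by (apply Rabs_def2b in Hdc || idtac; pose proof (Rle_abs (dw c)); lra).
      pose proof (exp_pos (- L * (c - t))).
      assert (Hg2 : g s - g t <= 0) by (rewrite E; apply Rmult_le_0_r; [|lra]; apply Rmult_le_0_l; lra).
      unfold g in Hg2. rewrite Ht, Rmult_0_r in Hg2.
      pose proof (exp_pos (- L * (s - t))). nra.
  - set (g := fun r => exp (L * (r - t)) * w r).
    assert (Hg : forall r, Rabs (r - t) < del -> is_derive g r (exp (L * (r - t)) * (dw r + L * w r))).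
    { intros r Hr. destruct (H r Hr) as [Hw _]. unfold g.
      auto_derive. repeat split; auto. exists (dw r); auto.
      replace (Derive (fun x => w x) r) with (dw r) by (symmetry; now apply is_derive_unique). replace (r + - t) with (r - t) by reflexivity. set (E := exp _). ring. }
    destruct (MVT_gen g s t (fun r => exp (L * (r - t)) * (dw r + L * w r))) as [c [Hc E]].
    + intros x Hx. apply Hg, Hin. rewrite Rmin_comm, Rmax_comm. lra.
    + intros x Hx. eapply derive_cpt. apply Hg, Hin. rewrite Rmin_comm, Rmax_comm. lra.
    + rewrite Rmin_comm, Rmax_comm in Hc.
      destruct (H c (Hin c Hc)) as [_ [Hwc Hdc]].
      assert (0 <= dw c + L * w c) by (pose proof (Rle_abs (- dw c)); rewrite Rabs_Ropp in *; lra).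
      pose proof (exp_pos (L * (c - t))).
      assert (Hg2 : 0 <= g t - g s).
      { rewrite E. apply Rmult_le_pos. apply Rmult_le_pos; lra. unfold Rmax, Rmin in *. destruct (Rle_dec s t); lra. }
      unfold g in Hg2. rewrite Ht, Rmult_0_r in Hg2.
      pose proof (exp_pos (L * (s - t))). nra.
Qed.

Definition wf (p q : pt) := (z1 p - z1 q)^2 + (z2 p - z2 q)^2 + (w1 p - w1 q)^2 + (w2 p - w2 q)^2.

Lemma wf_nonneg p q : 0 <= wf p q.
Proof. unfold wf. repeat apply Rplus_le_le_0_compat; apply pow2_ge_0. Qed.

Lemma wf_dist p q : dist4 p q * dist4 p q = wf p q.
Proof. unfold dist4. apply sqrt_sqrt. apply wf_nonneg. Qed.

Lemma wf_zero p q : wf p q = 0 -> p = q.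
Proof.
  intros H. unfold wf in H.
  pose proof (pow2_ge_0 (z1 p - z1 q)); pose proof (pow2_ge_0 (z2 p - z2 q));
  pose proof (pow2_ge_0 (w1 p - w1 q)); pose proof (pow2_ge_0 (w2 p - w2 q)).
  assert (E1 : (z1 p - z1 q)^2 = 0) by lra. assert (E2 : (z2 p - z2 q)^2 = 0) by lra.
  assert (E3 : (w1 p - w1 q)^2 = 0) by lra. assert (E4 : (w2 p - w2 q)^2 = 0) by lra.
  rewrite <- Rsqr_pow2 in E1, E2, E3, E4.
  apply Rsqr_0_uniq in E1, E2, E3, E4. apply pt_eq; lra.
Qed.

Lemma w_deriv (f1 f2 f3 f4 g1 g2 g3 g4 : R -> R) (t df1 df2 df3 df4 dg1 dg2 dg3 dg4 : R) :
  is_derive f1 t df1 -> is_derive f2 t df2 -> is_derive f3 t df3 -> is_derive f4 t df4 ->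
  is_derive g1 t dg1 -> is_derive g2 t dg2 -> is_derive g3 t dg3 -> is_derive g4 t dg4 ->
  is_derive (fun s => (f1 s - g1 s)^2 + (f2 s - g2 s)^2 + (f3 s - g3 s)^2 + (f4 s - g4 s)^2) t
    (2 * ((f1 t - g1 t) * (df1 - dg1) + (f2 t - g2 t) * (df2 - dg2) + (f3 t - g3 t) * (df3 - dg3) + (f4 t - g4 t) * (df4 - dg4))).
Proof.
  intros H1 H2 H3 H4 G1 G2 G3 G4.
  auto_derive.
  - repeat split; eexists; eassumption.
  - replace (Derive (fun x => f1 x) t) with df1 by (symmetry; now apply is_derive_unique).
    replace (Derive (fun x => f2 x) t) with df2 by (symmetry; now apply is_derive_unique).
    replace (Derive (fun x => f3 x) t) with df3 by (symmetry; now apply is_derive_unique).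
    replace (Derive (fun x => f4 x) t) with df4 by (symmetry; now apply is_derive_unique).
    replace (Derive (fun x => g1 x) t) with dg1 by (symmetry; now apply is_derive_unique).
    replace (Derive (fun x => g2 x) t) with dg2 by (symmetry; now apply is_derive_unique).
    replace (Derive (fun x => g3 x) t) with dg3 by (symmetry; now apply is_derive_unique).
    replace (Derive (fun x => g4 x) t) with dg4 by (symmetry; now apply is_derive_unique).
    ring.
Qed.

Lemma LL_combine f1 f2 f3 f4 x : LL f1 x -> LL f2 x -> LL f3 x -> LL f4 x ->
  exists r L, 0 < r /\ 0 <= L /\ forall u v, dist4 x u < r -> dist4 x v < r ->
    Rabs (f1 u - f1 v) <= L * dist4 u v /\ Rabs (f2 u - f2 v) <= L * dist4 u v /\
    Rabs (f3 u - f3 v) <= L * dist4 u v /\ Rabs (f4 u - f4 v) <= L * dist4 u v.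
Proof.
  intros [r1 [L1 [Hr1 [HL1 H1]]]] [r2 [L2 [Hr2 [HL2 H2]]]] [r3 [L3 [Hr3 [HL3 H3]]]] [r4 [L4 [Hr4 [HL4 H4]]]].
  exists (Rmin (Rmin r1 r2) (Rmin r3 r4)), (L1 + L2 + L3 + L4). split.
  { repeat apply Rmin_pos; auto. }
  split. lra.
  intros u v Hu Hv.
  pose proof (Rmin_l (Rmin r1 r2) (Rmin r3 r4)); pose proof (Rmin_r (Rmin r1 r2) (Rmin r3 r4)).
  pose proof (Rmin_l r1 r2); pose proof (Rmin_r r1 r2); pose proof (Rmin_l r3 r4); pose proof (Rmin_r r3 r4).
  specialize (H1 u v ltac:(lra) ltac:(lra)). specialize (H2 u v ltac:(lra) ltac:(lra)).
  specialize (H3 u v ltac:(lra) ltac:(lra)). specialize (H4 u v ltac:(lra) ltac:(lra)).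
  pose proof (dist4_nonneg u v).
  repeat split; nra.
Qed.

Lemma abs4 a1 a2 a3 a4 b1 b2 b3 b4 :
  Rabs (2 * (a1 * b1 + a2 * b2 + a3 * b3 + a4 * b4)) <=
  2 * (Rabs a1 * Rabs b1 + Rabs a2 * Rabs b2 + Rabs a3 * Rabs b3 + Rabs a4 * Rabs b4).
Proof.
  rewrite Rabs_mult, (Rabs_pos_eq 2) by lra. apply Rmult_le_compat_l. lra.
  rewrite <- !Rabs_mult.
  eapply Rle_trans. apply Rabs_triang. apply Rplus_le_compat_r.
  eapply Rle_trans. apply Rabs_triang. apply Rplus_le_compat_r.
  apply Rabs_triang.
Qed.

Lemma close_comp (p : pt -> R) (u v : R -> pt) a :
  (forall x y, Rabs (p x - p y) <= dist4 x y) ->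
  (forall eps, 0 < eps -> exists s, dist4 (u a) (u s) < eps /\ dist4 (v a) (v s) < eps /\ u s = v s) ->
  p (u a) = p (v a).
Proof.
  intros Hp H. apply NNPP. intro Hne.
  assert (Hpos : 0 < Rabs (p (u a) - p (v a))) by (apply Rabs_pos_lt; lra).
  destruct (H _ ltac:(apply (Rdiv_lt_0_compat _ 2 Hpos); lra)) as [s [H1 [H2 E]]].
  pose proof (Hp (u a) (u s)) as P1. pose proof (Hp (v a) (v s)) as P2. rewrite E in *.
  pose proof (Rabs_triang (p (u a) - p (v s)) (- (p (v a) - p (v s)))) as T.
  rewrite Rabs_Ropp in T. replace (p (u a) - p (v s) + - (p (v a) - p (v s))) with (p (u a) - p (v a)) in T by ring.
  lra.
Qed.

Lemma sol_uniq mu cc u v t0 : sol mu cc u -> sol mu cc v -> (forall t, 0 < Qp (u t)) ->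
  u t0 = v t0 -> forall t, u t = v t.
Proof.
  intros Hu Hv HQ H0.
  assert (Hall : forall s, u (s + t0) = v (s + t0)).
  { apply clopen_all.
    - rewrite Rplus_0_l; auto.
    - intros t Ht. set (x := u (t + t0)).
      destruct (LL_XK mu cc x (HQ _)) as [A1 [A2 [A3 A4]]].
      destruct (LL_combine _ _ _ _ x A1 A2 A3 A4) as [r [L [Hr [HL HB]]]].
      destruct (LL_away Qp x (LL_Qp x) ltac:(pose proof (HQ (t + t0)); unfold x; lra)) as [rq [Hrq Hq]].
      assert (HQx : 0 < Qp x) by apply HQ.
      set (r' := Rmin r rq). assert (Hr' : 0 < r') by (apply Rmin_pos; auto).
      assert (Hr'r : r' <= r) by apply Rmin_l. assert (Hr'q : r' <= rq) by apply Rmin_r.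
      destruct (curve_cont mu cc u (t + t0) Hu r' Hr') as [d1 [Hd1 C1]].
      destruct (curve_cont mu cc v (t + t0) Hv r' Hr') as [d2 [Hd2 C2]].
      set (del := Rmin d1 d2). assert (Hdel : 0 < del) by (apply Rmin_pos; auto).
      pose proof (Rmin_l d1 d2); pose proof (Rmin_r d1 d2).
      assert (Hin : forall s, Rabs (s - (t + t0)) < del -> dist4 x (u s) < r' /\ dist4 x (v s) < r').
      { intros s Hs. split. apply C1. unfold del in Hs; lra.
        unfold x. rewrite Ht. apply C2. unfold del in Hs; lra. }
      assert (HQin : forall y, dist4 x y < r' -> 0 < Qp y).
      { intros y Hy. specialize (Hq y ltac:(lra)).
        rewrite (Rabs_pos_eq (Qp x)) in Hq by lra. apply Rabs_le_between in Hq. lra. }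
      pose proof (gronwall0 (fun s => wf (u s) (v s))
        (fun s => 2 * ((z1 (u s) - z1 (v s)) * (z1 (XKf mu cc (u s)) - z1 (XKf mu cc (v s)))
                     + (z2 (u s) - z2 (v s)) * (z2 (XKf mu cc (u s)) - z2 (XKf mu cc (v s)))
                     + (w1 (u s) - w1 (v s)) * (w1 (XKf mu cc (u s)) - w1 (XKf mu cc (v s)))
                     + (w2 (u s) - w2 (v s)) * (w2 (XKf mu cc (u s)) - w2 (XKf mu cc (v s)))))
        (t + t0) del (8 * L) Hdel ltac:(lra)) as G.
      exists del. split; auto. intros s Hs.
      apply wf_zero. apply G.
      + intros s' Hs'. destruct (Hin s' Hs') as [Iu Iv].
        pose proof (HQin _ Iu) as Qu. pose proof (HQin _ Iv) as Qv.
        destruct (Hu s') as [U1 [U2 [U3 U4]]]. destruct (Hv s') as [V1 [V2 [V3 V4]]].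
        rewrite (XK_eq mu cc _ Qu) in U1, U2, U3, U4.
        rewrite (XK_eq mu cc _ Qv) in V1, V2, V3, V4.
        split; [|split].
        * exact (w_deriv _ _ _ _ _ _ _ _ s' _ _ _ _ _ _ _ _ U1 U2 U3 U4 V1 V2 V3 V4).
        * apply wf_nonneg.
        * destruct (HB (u s') (v s') ltac:(lra) ltac:(lra)) as [B1 [B2 [B3 B4]]].
          eapply Rle_trans. apply abs4.
          rewrite <- wf_dist.
          set (D := dist4 (u s') (v s')). assert (0 <= D) by apply dist4_nonneg.
          pose proof (dist4_z1 (u s') (v s')) as D1; pose proof (dist4_z2 (u s') (v s')) as D2;
          pose proof (dist4_w1 (u s') (v s')) as D3; pose proof (dist4_w2 (u s') (v s')) as D4.
          fold D in D1, D2, D3, D4.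
          assert (M : forall a b, Rabs a <= D -> Rabs b <= L * D -> Rabs a * Rabs b <= D * (L * D)).
          { intros a b Ha Hb. apply Rmult_le_compat; auto; apply Rabs_pos. }
          pose proof (M _ _ D1 B1); pose proof (M _ _ D2 B2); pose proof (M _ _ D3 B3); pose proof (M _ _ D4 B4).
          lra.
      + rewrite Ht. unfold wf. ring.
      + replace (s + t0 - (t + t0)) with (s - t) by ring. auto.
    - intros t H.
      assert (Hc : forall eps, 0 < eps -> exists s, dist4 (u (t + t0)) (u s) < eps /\ dist4 (v (t + t0)) (v s) < eps /\ u s = v s).
      { intros eps Heps.
        destruct (curve_cont mu cc u (t + t0) Hu _ Heps) as [d1 [Hd1 C1]].
        destruct (curve_cont mu cc v (t + t0) Hv _ Heps) as [d2 [Hd2 C2]].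
        destruct (H (Rmin d1 d2) ltac:(apply Rmin_pos; auto)) as [s [Hs Es]].
        pose proof (Rmin_l d1 d2); pose proof (Rmin_r d1 d2).
        exists (s + t0). split; [|split]; auto.
        apply C1. replace (s + t0 - (t + t0)) with (s - t) by ring. lra.
        apply C2. replace (s + t0 - (t + t0)) with (s - t) by ring. lra. }
      apply pt_eq; apply close_comp with (u := u) (v := v) (a := t + t0); auto.
      + apply dist4_z1. + apply dist4_z2. + apply dist4_w1. + apply dist4_w2. }
  intros t. replace t with ((t - t0) + t0) by ring. apply Hall.
Qed.

Lemma deriv_refl (f : R -> R) t0 t l : is_derive f (2 * t0 - t) l ->
  is_derive (fun s => f (2 * t0 - s)) t (- l).
Proof.
  intros H. auto_derive. eexists; eauto.
  change (2 * t0 + - t) with (2 * t0 - t).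
  replace (Derive (fun x => f x) (2 * t0 - t)) with l by (symmetry; now apply is_derive_unique).
  ring.
Qed.

Lemma deriv_refl_neg (f : R -> R) t0 t l : is_derive f (2 * t0 - t) l ->
  is_derive (fun s => - f (2 * t0 - s)) t l.
Proof.
  intros H. auto_derive. eexists; eauto.
  change (2 * t0 + - t) with (2 * t0 - t).
  replace (Derive (fun x => f x) (2 * t0 - t)) with l by (symmetry; now apply is_derive_unique).
  ring.
Qed.

Lemma Qf_n2 a b : Qf a (- b) = Qf a b.
Proof. unfold Qf. ring. Qed.
Lemma Qf_n1 a b : Qf (- a) b = Qf a b.
Proof. unfold Qf. ring. Qed.

Lemma Qp_Rplus y : Qp (Rplus y) = Qp y.
Proof. unfold Qp, Rplus. simpl. apply Qf_n2. Qed.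
Lemma Qp_Rminus y : Qp (Rminus y) = Qp y.
Proof. unfold Qp, Rminus. simpl. apply Qf_n1. Qed.

Lemma is_derive_eq' (f : R -> R) (x l l' : R) : is_derive f x l -> l = l' -> is_derive f x l'.
Proof. intros; subst; auto. Qed.

Ltac symfin := cbv beta; match goal with |- ?l = ?r => change (@eq R l r) end; unfold Ka, Kb, Kc, Kd; repeat rewrite Qf_n2; repeat rewrite Qf_n1; (ring || (set (S := sqrt _) in *; field; assumption)).

Lemma sol_Rplus mu cc u t0 : sol mu cc u -> (forall t, 0 < Qp (u t)) ->
  sol mu cc (fun t => Rplus (u (2 * t0 - t))).
Proof.
  intros Hs HQ t. destruct (Hs (2 * t0 - t)) as [H1 [H2 [H3 H4]]].
  assert (Qy : 0 < Qp (Rplus (u (2 * t0 - t)))) by (rewrite Qp_Rplus; apply HQ).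
  rewrite (XK_eq mu cc _ Qy). rewrite (XK_eq mu cc _ (HQ _)) in H1, H2, H3, H4.
  assert (Sne : sqrt (Qp (u (2*t0 - t))) <> 0) by (apply Rgt_not_eq, sqrt_lt_R0, HQ). unfold Qp in Sne.
  unfold XKf, Rplus in *; simpl in *.
  split; [|split; [|split]].
  - eapply is_derive_eq'. exact (deriv_refl (fun s => z1 (u s)) t0 t _ H1). symfin.
  - eapply is_derive_eq'. exact (deriv_refl_neg (fun s => z2 (u s)) t0 t _ H2). symfin.
  - eapply is_derive_eq'. exact (deriv_refl_neg (fun s => w1 (u s)) t0 t _ H3). unfold Ka, Kb, Kc, Kd; repeat rewrite Qf_n2; repeat rewrite Qf_n1. symfin.
  - eapply is_derive_eq'. exact (deriv_refl (fun s => w2 (u s)) t0 t _ H4). symfin.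
Qed.

Lemma sol_Rminus mu cc u t0 : sol mu cc u -> (forall t, 0 < Qp (u t)) ->
  sol mu cc (fun t => Rminus (u (2 * t0 - t))).
Proof.
  intros Hs HQ t. destruct (Hs (2 * t0 - t)) as [H1 [H2 [H3 H4]]].
  assert (Qy : 0 < Qp (Rminus (u (2 * t0 - t)))) by (rewrite Qp_Rminus; apply HQ).
  rewrite (XK_eq mu cc _ Qy). rewrite (XK_eq mu cc _ (HQ _)) in H1, H2, H3, H4.
  assert (Sne : sqrt (Qp (u (2*t0 - t))) <> 0) by (apply Rgt_not_eq, sqrt_lt_R0, HQ). unfold Qp in Sne.
  unfold XKf, Rminus in *; simpl in *.
  split; [|split; [|split]].
  - eapply is_derive_eq'. exact (deriv_refl_neg (fun s => z1 (u s)) t0 t _ H1). symfin.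
  - eapply is_derive_eq'. exact (deriv_refl (fun s => z2 (u s)) t0 t _ H2). symfin.
  - eapply is_derive_eq'. exact (deriv_refl (fun s => w1 (u s)) t0 t _ H3). symfin.
  - eapply is_derive_eq'. exact (deriv_refl_neg (fun s => w2 (u s)) t0 t _ H4). symfin.
Qed.

Lemma reflect_plus mu cc u t0 : sol mu cc u -> (forall t, 0 < Qp (u t)) ->
  Rplus (u t0) = u t0 -> forall t, Rplus (u (2 * t0 - t)) = u t.
Proof.
  intros Hs HQ Hf t. symmetry.
  apply (sol_uniq mu cc u (fun t => Rplus (u (2 * t0 - t))) t0 Hs (sol_Rplus mu cc u t0 Hs HQ) HQ).
  replace (2 * t0 - t0) with t0 by ring. auto.
Qed.

Lemma reflect_minus mu cc u t0 : sol mu cc u -> (forall t, 0 < Qp (u t)) ->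
  Rminus (u t0) = u t0 -> forall t, Rminus (u (2 * t0 - t)) = u t.
Proof.
  intros Hs HQ Hf t. symmetry.
  apply (sol_uniq mu cc u (fun t => Rminus (u (2 * t0 - t))) t0 Hs (sol_Rminus mu cc u t0 Hs HQ) HQ).
  replace (2 * t0 - t0) with t0 by ring. auto.
Qed.

Lemma Sigma_noMoon mu cc x : 0 < mu -> Sigma mu cc x -> 0 < Qp x.
Proof.
  intros Hmu [A [Hconn [HK [HAx [y [HAy [Hy1 Hy2]]]]]]].
  destruct (Qp_nonneg x) as [?|E]; auto. exfalso. symmetry in E.
  set (U := fun p => hf mu cc p < - mu / 4).
  set (V := fun p => - mu / 4 < hf mu cc p).
  assert (oU : open4 U).
  { intros p Hp. unfold U in Hp.
    destruct (cont4_h mu cc p (- mu / 4 - hf mu cc p) ltac:(lra)) as [d [Hd H]].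
    exists d. split; auto. intros q Hq. specialize (H q Hq). apply Rabs_def2 in H. unfold U. lra. }
  assert (oV : open4 V).
  { intros p Hp. unfold V in Hp.
    destruct (cont4_h mu cc p (hf mu cc p + mu / 4) ltac:(lra)) as [d [Hd H]].
    exists d. split; auto. intros q Hq. specialize (H q Hq). apply Rabs_def2 in H. unfold V. lra. }
  assert (Hcl : forall p, A p -> U p \/ V p).
  { intros p Hp. destruct (Qp_nonneg p) as [Q|Q].
    - right. unfold V. rewrite h_K by auto. rewrite (HK p Hp). lra.
    - left. unfold U. symmetry in Q. rewrite (h_Q0 mu cc p Q). lra. }
  destruct (Hconn U V oU oV Hcl) as [p [Hp [Up Vp]]].
  - exists x. split; auto. unfold U. rewrite (h_Q0 mu cc x E). lra.
  - exists y. split; auto. unfold V.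
    assert (Qy : 0 < Qp y) by (unfold Qp, Qf; rewrite Hy1, Hy2; lra).
    rewrite h_K by auto. rewrite (HK y HAy). lra.
  - unfold U, V in *. lra.
Qed.

Lemma comp_id x : Rminus (Rplus (Rminus (Rplus x))) = x.
Proof. destruct x; unfold Rminus, Rplus; simpl; f_equal; ring. Qed.

Theorem lemma3p2 (mu c : R) (Fl : R -> pt -> pt) (gam : R -> pt)
  (tau : pt -> R) (b : bool) (p0 : pt) :
  0 < mu < 1 ->
  below_crit mu c ->
  is_flow mu c Fl ->
  arc_in_Cplus mu c gam ->
  hitting_hyp mu c b Fl gam tau ->
  in_arc gam p0 ->
  slope_coord b (Fl (tau p0) p0) = 0 ->
  symmetric_periodic_from Fl p0.
Proof.
  intros Hmu _ Hflow [Harc _] [Hhit _] Hin Hslope.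
  assert (Hp0 : Cplus mu c p0) by (destruct Hin as [s [Hs ->]]; apply Harc; auto).
  destruct Hp0 as [HS0 [Hz20 Hw10]].
  destruct (Hhit p0 Hin) as [HT [[HS1 Hcut] _]].
  set (T := tau p0) in *.
  set (u := fun t => Fl t p0).
  destruct (Hflow p0 HS0) as [HF0 Hder].
  assert (Hsol : sol mu c u) by (intros t; apply Hder).
  assert (HK0 : K mu c (u 0) = 0).
  { unfold u. rewrite HF0. destruct HS0 as [A [_ [HK [HA _]]]]. auto. }
  assert (HQ0 : 0 < Qp (u 0)) by (unfold u; rewrite HF0; apply (Sigma_noMoon mu c); [lra|auto]).
  assert (HQ : forall t, 0 < Qp (u t)) by (intros t; apply (sol_energy mu c u); auto; lra).
  assert (Fix0 : Rplus (u 0) = u 0).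
  { unfold u. rewrite HF0. apply pt_eq; unfold Rplus; simpl; lra. }
  pose proof (reflect_plus mu c u 0 Hsol HQ Fix0) as R1.
  assert (R1' : forall t, Rplus (u (- t)) = u t).
  { intros t. rewrite <- (R1 t). f_equal. f_equal. ring. }
  destruct b; simpl in Hcut, Hslope.
  - assert (Fix1 : Rplus (u T) = u T) by (apply pt_eq; unfold Rplus; simpl; unfold u; lra).
    pose proof (reflect_plus mu c u T Hsol HQ Fix1) as R2.
    exists (2 * T). split. lra. split.
    + intros t. change (u (t + 2 * T) = u t).
      rewrite <- (R2 (t + 2 * T)). replace (2 * T - (t + 2 * T)) with (- t) by ring. apply R1'.
    + exists Rplus. split. left; auto. exists 0. intros t.
      change (Rplus (u (2 * T - t + 0)) = u (t + 0)).
      rewrite <- (R2 (t + 0)). f_equal. f_equal. ring.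
  - assert (Fix1 : Rminus (u T) = u T) by (apply pt_eq; unfold Rminus; simpl; unfold u; lra).
    pose proof (reflect_minus mu c u T Hsol HQ Fix1) as R2.
    assert (Per : forall t, u (t + 4 * T) = u t).
    { intros t.
      assert (E1 : u (- t) = Rplus (u t)) by (rewrite <- (R1' (- t)); f_equal; f_equal; ring).
      assert (E2 : u (t + 2 * T) = Rminus (u (- t))) by (rewrite <- (R2 (t + 2 * T)); f_equal; f_equal; ring).
      assert (E3 : u (- (t + 2 * T)) = Rplus (u (t + 2 * T))) by (rewrite <- (R1' (- (t + 2 * T))); f_equal; f_equal; ring).
      assert (E4 : u (t + 4 * T) = Rminus (u (- (t + 2 * T)))) by (rewrite <- (R2 (t + 4 * T)); f_equal; f_equal; ring).
      rewrite E4, E3, E2, E1. apply comp_id. }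
    exists (4 * T). split. lra. split.
    + intros t. apply Per.
    + exists Rplus. split. left; auto. exists 0. intros t.
      change (Rplus (u (4 * T - t + 0)) = u (t + 0)).
      replace (4 * T - t + 0) with (- t + 4 * T) by ring. rewrite Per, R1'.
      f_equal. ring.
Qed.
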